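(* $\operatorname{Sort} \equiv_{\mathrm{sW}} \min^-_{\omega+1}$.
   Context: Represented spaces: a representation of a set $X$ is a partial surjection $\delta_X:\subseteq\mathbb{N}^\mathbb{N}\to X$. For a partial multi-valued function $f:\subseteq X\rightrightarrows Y$ between represented spaces, a realizer is a partial $F:\subseteq\mathbb{N}^\mathbb{N}\to\mathbb{N}^\mathbb{N}$ with $\delta_Y(F(p))\in f(\delta_X(p))$ for all $p$ with $\delta_X(p)\in\mathrm{dom}(f)$. Strong Weihrauch reducibility: $f\le_{\mathrm{sW}} g$ iff there are computable partial $H,K:\subseteq\mathbb{N}^\mathbb{N}\to\mathbb{N}^\mathbb{N}$ such that $H\circ G\circ K$ is a realizer of $f$ for every realizer $G$ of $g$; $\equiv_{\mathrm{sW}}$ denotes reducibility in both directions. $\operatorname{Sort}:2^\mathbb{N}\to 2^\mathbb{N}$ is defined by $\operatorname{Sort}(p)=0^n1^\mathbb{N}$ if $p$ contains exactly $n$ occurrences of $0$, and $\operatorname{Sort}(p)=0^\mathbb{N}$ if $p$ contains infinitely many occurrences of $0$. $\omega+1:=\{-2^{-n}:n\in\mathbb{N}\}\cup\{0\}\subseteq\mathbb{R}$, a computable metric space with the Euclidean metric and dense set $\omega+1$ itself; its points are represented by the Cauchy representation (effective Cauchy sequences from $\omega+1$, i.e. sequences $(a_i)$ with $|a_i-a_j|\le 2^{-i}$ for $j\ge i$). Closed subsets of $\omega+1$ are represented negatively ($\mathcal{A}_-(\omega+1)$): a name of a closed $A$ is an enumeration of basic open balls $B(a,q)$ (with $a\in\omega+1$,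 $q$ a nonnegative rational) whose union is $(\omega+1)\setminus A$. $\min^-_{\omega+1}:\subseteq\mathcal{A}_-(\omega+1)\to\omega+1$ maps each nonempty closed $A$ to $\min A$ (with respect to the usual order of $\mathbb{R}$). *)

(* Defs.v *)
From Stdlib Require Import Reals Lra Lia Arith List.
Import ListNotations.
Open Scope R_scope.

Definition baire := nat -> nat.
(** A partial function F :⊆ N^N -> N^N ; [F p = None] means p ∉ dom F. *)
Definition pfun := baire -> option baire.

Inductive recf : Type :=
| RZero : recf
| RSucc : recf
| RProj : nat -> recf
| RComp : recf -> list recf -> recf
| RPrec : recf -> recf -> recf
| RMu   : recf -> recf.

Inductive eval : recf -> list nat -> nat -> Prop :=
| ev_zero : forall v, eval RZero v 0
| ev_succ : forall x v, eval RSucc (x :: v) (S x)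
| ev_proj : forall i v x, nth_error v i = Some x -> eval (RProj i) v x
| ev_comp : forall f gs v ws y,
    evals gs v ws -> eval f ws y -> eval (RComp f gs) v y
| ev_prec0 : forall f g v y, eval f v y -> eval (RPrec f g) (0%nat :: v) y
| ev_precS : forall f g n v z y,
    eval (RPrec f g) (n :: v) z -> eval g (n :: z :: v) y ->
    eval (RPrec f g) (S n :: v) y
| ev_mu : forall f v y,
    eval f (y :: v) 0 ->
    (forall z, (z < y)%nat -> exists w, eval f (z :: v) (S w)) ->
    eval (RMu f) v y
with evals : list recf -> list nat -> list nat -> Prop :=
| evs_nil : forall v, evals [] v []
| evs_cons : forall g gs v y ys,
    eval g v y -> evals gs v ys -> evals (g :: gs) v (y :: ys).

Definition cpair (a b : nat) : nat := ((a + b) * (a + b + 1) / 2 + b)%nat.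
Fixpoint lcode (l : list nat) : nat :=
  match l with
  | [] => 0%nat
  | x :: t => S (cpair x (lcode t))
  end.

Definition pre (p : baire) (m : nat) : list nat := map p (seq 0 m).

Definition wout (e : recf) (p : baire) (m : nat) (w : list nat) : Prop :=
  eval e [lcode (pre p m)] (lcode w).

Definition computes (e : recf) (p q : baire) : Prop :=
  (forall m, exists w, wout e p m w) /\
  (forall m w w', wout e p m w -> wout e p (S m) w' -> exists t, w' = w ++ t) /\
  (forall n, exists m w, wout e p m w /\ nth_error w n = Some (q n)).

Definition computable (F : pfun) : Prop :=
  exists e, forall p q, F p = Some q -> computes e p q.

Record rep_space := {
  carrier : Type;
  delta : baire -> carrier -> Prop  (* graph of the partial surjection δ_X *)
}.

(** A partial multi-valued function f :⊆ X ⇉ Y, given by its graph: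
    [f x y] means y ∈ f(x); dom f = { x | exists y, f x y }. *)
Definition problem (X Y : rep_space) := carrier X -> carrier Y -> Prop.

Definition realizer {X Y : rep_space} (f : problem X Y) (F : pfun) : Prop :=
  forall p x, delta X p x -> (exists y, f x y) ->
    exists r, F p = Some r /\ exists y, delta Y r y /\ f x y.

Definition pcomp (H G K : pfun) : pfun :=
  fun p => match K p with
           | None => None
           | Some q => match G q with
                       | None => None
                       | Some s => H s
                       end
           end.

Definition sW_le {X Y U V : rep_space} (f : problem X Y) (g : problem U V) : Prop :=
  exists H K : pfun, computable H /\ computable K /\
    forall G : pfun, realizer g G -> realizer f (pcomp H G K).

Definition sW_equiv {X Y U V : rep_space} (f : problem X Y) (g : problem U V) : Prop :=
  sW_le f g /\ sW_le g f.

Definition cantor : rep_space := {|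
  carrier := nat -> bool;
  delta := fun p b => forall n, (p n = 0%nat /\ b n = false) \/ (p n = 1%nat /\ b n = true)
|}.

Fixpoint zeros_upto (b : nat -> bool) (m : nat) : nat :=
  match m with
  | O => O
  | S k => (zeros_upto b k + (if b k then 0 else 1))%nat
  end.

Definition exactly_zeros (b : nat -> bool) (n : nat) : Prop :=
  exists M, forall m, (M <= m)%nat -> zeros_upto b m = n.

Definition inf_zeros (b : nat -> bool) : Prop :=
  forall N, exists i, (N <= i)%nat /\ b i = false.

Definition Sort : problem cantor cantor := fun p q =>
  (exists n, exactly_zeros p n /\ forall i, q i = Nat.leb n i) \/
  (inf_zeros p /\ forall i, q i = false).

Definition in_omega1 (x : R) : Prop := x = 0 \/ exists n, x = - (/2) ^ n.

Definition nu (k : nat) : R :=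
  match k with
  | O => 0
  | S n => - (/2) ^ n
  end.

Definition omega1 : rep_space := {|
  carrier := R;
  delta := fun p x =>
    (forall i j, (i <= j)%nat -> Rabs (nu (p i) - nu (p j)) <= (/2) ^ i) /\
    Un_cv (fun i => nu (p i)) x
|}.

Definition in_ball (b : nat) (x : R) : Prop :=
  exists a m d, b = cpair a (cpair m d) /\
    in_omega1 x /\ Rabs (x - nu a) < INR m / INR (S d).

(** Negative representation of closed subsets of ω+1: p(i) = 0 enumerates
    nothing, p(i) = b+1 enumerates ball b; the name denotes the complement
    in ω+1 of the union of the enumerated balls. *)
Definition closed_omega1 : rep_space := {|
  carrier := R -> Prop;
  delta := fun p A => forall x,
    A x <-> (in_omega1 x /\ ~ exists i b, p i = S b /\ in_ball b x)
|}.

Definition min_omega1 : problem closed_omega1 omega1 := fun A y =>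
  A y /\ forall z, A z -> y <= z.

(* Main.v *)
From Stdlib Require Import Reals Lra Lia Arith List Classical.
Require Import Defs.
Import ListNotations.
Open Scope bool_scope.
Open Scope nat_scope.


Fixpoint mufree (e : recf) : bool :=
  match e with
  | RMu _ => false
  | RComp f gs => mufree f && (fix mf (l : list recf) : bool :=
       match l with [] => true | g :: t => mufree g && mf t end) gs
  | RPrec f g => mufree f && mufree g
  | _ => true
  end.

Lemma mufree_comp f gs : mufree (RComp f gs) = mufree f && forallb mufree gs.
Proof. reflexivity. Qed.

Scheme eval_ind2 := Induction for eval Sort Prop
  with evals_ind2 := Induction for evals Sort Prop.

Lemma eval_det : forall e v y, eval e v y -> mufree e = true ->
  forall y', eval e v y' -> y = y'.
Proof.
  apply (eval_ind2
    (fun e v y _ => mufree e = true -> forall y', eval e v y' -> y = y')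
    (fun gs v ys _ => forallb mufree gs = true -> forall ys', evals gs v ys' -> ys = ys')).
  - intros v _ y' H; inversion H; auto.
  - intros x v _ y' H; inversion H; auto.
  - intros i v x e _ y' H; inversion H; subst. congruence.
  - intros f gs v ws y Hs IHs He IHe Hm y' H. rewrite mufree_comp in Hm.
    apply andb_prop in Hm as [Hm1 Hm2]. inversion H; subst.
    assert (ws = ws0) by (apply IHs; auto). subst. apply IHe; auto.
  - intros f g v y He IHe Hm y' H. simpl in Hm. apply andb_prop in Hm as [Hm1 Hm2].
    inversion H; subst. apply IHe; auto.
  - intros f g n v z y H1 IH1 H2 IH2 Hm y' H. simpl in Hm.
    inversion H; subst. assert (z = z0) by (apply IH1; auto). subst.
    apply andb_prop in Hm as [Hm1 Hm2]. apply IH2; auto.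
  - intros. discriminate.
  - intros v _ ys' H; inversion H; auto.
  - intros g gs v y ys Hg IHg Hs IHs Hm ys' H. simpl in Hm.
    apply andb_prop in Hm as [Hm1 Hm2]. inversion H; subst.
    f_equal; auto.
Qed.

Definition PR (n : nat) (f : list nat -> nat) : Prop :=
  exists e, mufree e = true /\ forall v, length v = n -> eval e v (f v).

Lemma PR_ext n f g : PR n f -> (forall v, length v = n -> f v = g v) -> PR n g.
Proof. intros [e [He H]] Hfg. exists e; split; auto. intros v Hv. rewrite <- Hfg; auto. Qed.

Lemma PR_zero n : PR n (fun _ => 0).
Proof. exists RZero; split; auto. intros; constructor. Qed.

Lemma PR_proj n i : i < n -> PR n (fun v => nth i v 0).
Proof. intros Hi. exists (RProj i); split; auto. intros v Hv. constructor.
  apply nth_error_nth'. lia. Qed.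

Lemma PR_compL n (fs : list (list nat -> nat)) :
  Forall (PR n) fs -> exists es, forallb mufree es = true /\
    forall v, length v = n -> evals es v (map (fun f => f v) fs).
Proof.
  induction 1.
  - exists []; split; auto. intros; constructor.
  - destruct H as [e [He H]]. destruct IHForall as [es [Hes Hs]].
    exists (e :: es); split. simpl; rewrite He, Hes; auto.
    intros v Hv; simpl; constructor; auto.
Qed.

Lemma PR_comp n k g fs : PR k g -> length fs = k -> Forall (PR n) fs ->
  PR n (fun v => g (map (fun f => f v) fs)).
Proof.
  intros [e [He H]] Hl Hf. destruct (PR_compL n fs Hf) as [es [Hes Hs]].
  exists (RComp e es); split. rewrite mufree_comp, He, Hes; auto.
  intros v Hv. econstructor. apply Hs; auto. apply H. rewrite length_map; auto.
Qed.

Fixpoint prec (f g : list nat -> nat) (x : nat) (w : list nat) : nat :=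
  match x with 0 => f w | S k => g (k :: prec f g k w :: w) end.

Lemma PR_rec n f g : PR n f -> PR (S (S n)) g ->
  PR (S n) (fun v => prec f g (hd 0 v) (tl v)).
Proof.
  intros [e [He H]] [e2 [He2 H2]]. exists (RPrec e e2); split. simpl; rewrite He, He2; auto.
  intros [|x w] Hv; simpl in Hv. discriminate. injection Hv as Hv. simpl.
  induction x; simpl. constructor; auto. econstructor. apply IHx. apply H2. simpl; lia.
Qed.

Definition P1 (g : nat -> nat) := fun v : list nat => g (nth 0 v 0).
Definition P2 (g : nat -> nat -> nat) := fun v : list nat => g (nth 0 v 0) (nth 1 v 0).
Definition P3 (g : nat -> nat -> nat -> nat) :=
  fun v : list nat => g (nth 0 v 0) (nth 1 v 0) (nth 2 v 0).

Lemma comp1 n g f : PR 1 (P1 g) -> PR n f -> PR n (fun v => g (f v)).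
Proof. intros Hg Hf. eapply PR_ext. apply (PR_comp n 1 (P1 g) [f]); auto.
  intros; reflexivity. Qed.
Lemma comp2 n g f1 f2 : PR 2 (P2 g) -> PR n f1 -> PR n f2 -> PR n (fun v => g (f1 v) (f2 v)).
Proof. intros Hg H1 H2. eapply PR_ext. apply (PR_comp n 2 (P2 g) [f1; f2]); auto.
  intros; reflexivity. Qed.
Lemma comp3 n g f1 f2 f3 : PR 3 (P3 g) -> PR n f1 -> PR n f2 -> PR n f3 ->
  PR n (fun v => g (f1 v) (f2 v) (f3 v)).
Proof. intros Hg H1 H2 H3. eapply PR_ext. apply (PR_comp n 3 (P3 g) [f1; f2; f3]); auto.
  intros; reflexivity. Qed.

Lemma PR_succ n f : PR n f -> PR n (fun v => S (f v)).
Proof. intros Hf. apply (comp1 n S f); auto. exists RSucc; split; auto.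
  intros [|x w] Hv; simpl in Hv. discriminate. constructor. Qed.

Lemma PR_const n c : PR n (fun _ => c).
Proof. induction c. apply PR_zero. apply PR_succ; auto. Qed.

Lemma PR_rec2 (f : nat -> nat) (g : nat -> nat -> nat -> nat) (h : nat -> nat -> nat) :
  PR 1 (P1 f) -> PR 3 (P3 g) ->
  (forall y, h 0 y = f y) -> (forall x y, h (S x) y = g x (h x y) y) ->
  PR 2 (P2 h).
Proof.
  intros Hf Hg H0 HS. eapply PR_ext. apply (PR_rec 1 (P1 f) (P3 g)); auto.
  intros [|x [|y [|]]] Hv; simpl in Hv; try discriminate. unfold P2; simpl.
  induction x; simpl. unfold P1; simpl; auto. rewrite HS, IHx. reflexivity.
Qed.

Definition P4 (g : nat -> nat -> nat -> nat -> nat) :=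
  fun v : list nat => g (nth 0 v 0) (nth 1 v 0) (nth 2 v 0) (nth 3 v 0).
Lemma PR_rec3 (f : nat -> nat -> nat) (g : nat -> nat -> nat -> nat -> nat)
  (h : nat -> nat -> nat -> nat) :
  PR 2 (P2 f) -> PR 4 (P4 g) ->
  (forall y z, h 0 y z = f y z) -> (forall x y z, h (S x) y z = g x (h x y z) y z) ->
  PR 3 (P3 h).
Proof.
  intros Hf Hg H0 HS. eapply PR_ext. apply (PR_rec 2 (P2 f) (P4 g)); auto.
  intros [|x [|y [|z [|]]]] Hv; simpl in Hv; try discriminate. unfold P3; simpl.
  induction x; simpl. unfold P2; simpl; auto. rewrite HS, IHx. reflexivity.
Qed.

Lemma PRp n i : i < n -> PR n (fun v => nth i v 0).
Proof. apply PR_proj. Qed.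


Lemma PR_id1 : PR 1 (P1 (fun y => y)).
Proof. apply (PRp 1 0); lia. Qed.

Lemma PR_rec1 (c : nat) (g : nat -> nat -> nat) (h : nat -> nat) :
  PR 2 (P2 g) -> h 0 = c -> (forall x, h (S x) = g x (h x)) -> PR 1 (P1 h).
Proof.
  intros Hg H0 HS. eapply PR_ext. apply (PR_rec 0 (fun _ => c) (P2 g)); auto.
  apply PR_const. intros [|x [|]] Hv; simpl in Hv; try discriminate. unfold P1; simpl.
  induction x; simpl; auto. rewrite HS, IHx; reflexivity.
Qed.

Ltac pr_proj := first [apply (PRp _ 0); lia | apply (PRp _ 1); lia | apply (PRp _ 2); lia | apply (PRp _ 3); lia | apply (PRp _ 4); lia].

Lemma PR_add : PR 2 (P2 Nat.add).
Proof.
  apply (PR_rec2 (fun y => y) (fun _ r _ => S r)). apply PR_id1.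
  apply (PR_succ 3 (fun v => nth 1 v 0)); pr_proj. reflexivity. reflexivity.
Qed.

Lemma PR_pred : PR 1 (P1 pred).
Proof. apply (PR_rec1 0 (fun x _ => x)). apply (PRp 2 0); lia. reflexivity. reflexivity. Qed.

Definition subr (x y : nat) := y - x.
Lemma PR_subr : PR 2 (P2 subr).
Proof.
  apply (PR_rec2 (fun y => y) (fun _ r _ => pred r)). apply PR_id1.
  apply (comp1 3 pred); [apply PR_pred| pr_proj].
  intros; unfold subr; lia. intros; unfold subr; lia.
Qed.
Lemma PR_sub : PR 2 (P2 Nat.sub).
Proof. apply (comp2 2 subr); [apply PR_subr|pr_proj|pr_proj]. Qed.

Lemma PR_mul : PR 2 (P2 Nat.mul).
Proof.
  apply (PR_rec2 (fun _ => 0) (fun _ r y => y + r)). apply PR_const.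
  apply (comp2 3 Nat.add); [apply PR_add|pr_proj|pr_proj]. reflexivity. reflexivity.
Qed.

Definition ifz (c a b : nat) := match c with 0 => a | _ => b end.
Lemma PR_ifz : PR 3 (P3 ifz).
Proof.
  apply (PR_rec3 (fun a _ => a) (fun _ _ _ b => b)). apply (PRp 2 0); lia.
  apply (PRp 4 3); lia. reflexivity. reflexivity.
Qed.

Lemma Padd n f g : PR n f -> PR n g -> PR n (fun v => f v + g v).
Proof. intros; apply comp2; auto; apply PR_add. Qed.
Lemma Psub n f g : PR n f -> PR n g -> PR n (fun v => f v - g v).
Proof. intros; apply comp2; auto; apply PR_sub. Qed.
Lemma Pmul n f g : PR n f -> PR n g -> PR n (fun v => f v * g v).
Proof. intros; apply comp2; auto; apply PR_mul. Qed.
Lemma Pifz n f g h : PR n f -> PR n g -> PR n h -> PR n (fun v => ifz (f v) (g v) (h v)).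
Proof. intros; apply comp3; auto; apply PR_ifz. Qed.
Lemma Ppred n f : PR n f -> PR n (fun v => pred (f v)).
Proof. intros; apply comp1; auto; apply PR_pred. Qed.

Fixpoint pow2 (k : nat) : nat := match k with 0 => 1 | S j => pow2 j + pow2 j end.
Lemma pow2_eq k : pow2 k = 2 ^ k.
Proof. induction k; simpl; lia. Qed.
Lemma PR_pow2 : PR 1 (P1 pow2).
Proof. apply (PR_rec1 1 (fun _ r => r + r)). apply Padd; pr_proj. reflexivity. reflexivity. Qed.
Lemma Ppow2 n f : PR n f -> PR n (fun v => pow2 (f v)).
Proof. intros; apply comp1; auto; apply PR_pow2. Qed.

Fixpoint tri (s : nat) : nat := match s with 0 => 0 | S k => tri k + S k end.
Lemma PR_tri : PR 1 (P1 tri).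
Proof. apply (PR_rec1 0 (fun x r => r + S x)). apply Padd. pr_proj. apply PR_succ; pr_proj.
  reflexivity. reflexivity. Qed.
Lemma Ptri n f : PR n f -> PR n (fun v => tri (f v)).
Proof. intros; apply comp1; auto; apply PR_tri. Qed.

Lemma tri_eq s : tri s = s * (s + 1) / 2.
Proof.
  induction s. reflexivity. simpl tri. rewrite IHs.
  replace (S s * (S s + 1)) with (s * (s + 1) + S s * 2) by nia.
  rewrite Nat.div_add by lia. lia.
Qed.

Lemma cpair_tri a b : cpair a b = tri (a + b) + b.
Proof. unfold cpair. rewrite tri_eq. reflexivity. Qed.

Lemma PR_cpair : PR 2 (P2 cpair).
Proof. apply (PR_ext 2 (fun v => tri (nth 0 v 0 + nth 1 v 0) + nth 1 v 0)).
  apply Padd. apply Ptri. apply Padd; pr_proj. pr_proj.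
  intros v _. unfold P2. rewrite cpair_tri. reflexivity. Qed.
Lemma Pcpair n f g : PR n f -> PR n g -> PR n (fun v => cpair (f v) (g v)).
Proof. intros; apply comp2; auto; apply PR_cpair. Qed.

Fixpoint sq (c : nat) : nat :=
  match c with 0 => 0 | S x => ifz (tri (S (sq x)) - S x) (S (sq x)) (sq x) end.
Lemma PR_sq : PR 1 (P1 sq).
Proof. apply (PR_rec1 0 (fun x r => ifz (tri (S r) - S x) (S r) r)).
  apply Pifz. apply Psub. apply Ptri, PR_succ; pr_proj. apply PR_succ; pr_proj.
  apply PR_succ; pr_proj. pr_proj. reflexivity. reflexivity. Qed.

Lemma tri_mono a b : a <= b -> tri a <= tri b.
Proof. induction 1; simpl; lia. Qed.

Lemma sq_inv c : tri (sq c) <= c < tri (S (sq c)).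
Proof.
  induction c. simpl; lia. simpl sq. simpl tri in *.
  destruct (tri (sq c) + S (sq c) - S c) eqn:Heq; simpl ifz; simpl tri; lia.
Qed.

Lemma sq_unique c s : tri s <= c < tri (S s) -> sq c = s.
Proof.
  intros H. pose proof (sq_inv c). destruct (Nat.lt_trichotomy (sq c) s) as [L|[L|L]]; auto.
  - pose proof (tri_mono (S (sq c)) s L). lia.
  - pose proof (tri_mono (S s) (sq c) L). lia.
Qed.

Definition usnd c := c - tri (sq c).
Definition ufst c := sq c - usnd c.

Lemma unpair_cpair a b : ufst (cpair a b) = a /\ usnd (cpair a b) = b.
Proof.
  rewrite cpair_tri. assert (sq (tri (a + b) + b) = a + b).
  { apply sq_unique. simpl tri. lia. }
  unfold ufst, usnd. rewrite H. lia.
Qed.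
Lemma ufst_cpair a b : ufst (cpair a b) = a. Proof. apply unpair_cpair. Qed.
Lemma usnd_cpair a b : usnd (cpair a b) = b. Proof. apply unpair_cpair. Qed.

Lemma cpair_unpair c : cpair (ufst c) (usnd c) = c.
Proof. pose proof (sq_inv c). simpl tri in H. rewrite cpair_tri. unfold ufst, usnd.
  replace (sq c - (c - tri (sq c)) + (c - tri (sq c))) with (sq c) by lia. lia. Qed.

Lemma cpair_inj a b a' b' : cpair a b = cpair a' b' -> a = a' /\ b = b'.
Proof. intros H. split.
  rewrite <- (ufst_cpair a b), <- (ufst_cpair a' b'), H; auto.
  rewrite <- (usnd_cpair a b), <- (usnd_cpair a' b'), H; auto. Qed.

Lemma PR_usnd : PR 1 (P1 usnd).
Proof. apply Psub. pr_proj. apply Ptri. apply comp1. apply PR_sq. pr_proj. Qed.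
Lemma PR_ufst : PR 1 (P1 ufst).
Proof. apply Psub. apply comp1. apply PR_sq. pr_proj. apply PR_usnd. Qed.
Lemma Pusnd n f : PR n f -> PR n (fun v => usnd (f v)).
Proof. intros; apply comp1; auto; apply PR_usnd. Qed.
Lemma Pufst n f : PR n f -> PR n (fun v => ufst (f v)).
Proof. intros; apply comp1; auto; apply PR_ufst. Qed.

Lemma cpair_ge a b : b <= cpair a b.
Proof. rewrite cpair_tri. lia. Qed.

Definition hdc c := ufst (pred c).
Definition tlc c := usnd (pred c).
Fixpoint itl (j c : nat) : nat := match j with 0 => c | S k => tlc (itl k c) end.
Definition nthc c j := hdc (itl j c).
Fixpoint cnt (j c : nat) : nat := match j with 0 => 0 | S k => cnt k c + ifz (itl k c) 0 1 end.
Definition lenc c := cnt c c.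

Lemma hdc_cons x t : hdc (lcode (x :: t)) = x.
Proof. unfold hdc; simpl. apply ufst_cpair. Qed.
Lemma tlc_cons x t : tlc (lcode (x :: t)) = lcode t.
Proof. unfold tlc; simpl. apply usnd_cpair. Qed.
Lemma tlc_nil : tlc (lcode []) = 0.
Proof. reflexivity. Qed.

Lemma itl_lcode j l : itl j (lcode l) = lcode (skipn j l).
Proof.
  induction j; simpl; auto. rewrite IHj. clear IHj. revert l; induction j; intros l.
  - destruct l; simpl; auto. apply tlc_cons.
  - destruct l; simpl; auto.
Qed.

Lemma nthc_lcode l j : nthc (lcode l) j = nth j l 0.
Proof.
  unfold nthc. rewrite itl_lcode. revert l; induction j; intros [|x t]; simpl; auto.
  apply hdc_cons.
Qed.

Lemma lcode_len l : length l <= lcode l.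
Proof. induction l; simpl; auto. pose proof (cpair_ge a (lcode l)). lia. Qed.

Lemma cnt_lcode j l : cnt j (lcode l) = min j (length l).
Proof.
  induction j. simpl; auto. cbn [cnt]. rewrite IHj, itl_lcode.
  destruct (le_lt_dec (length l) j).
  - rewrite skipn_all2 by lia. cbn [lcode ifz]. lia.
  - destruct (skipn j l) eqn:E. apply (f_equal (@length nat)) in E.
    rewrite length_skipn in E. simpl in E. lia. cbn [lcode ifz]. lia.
Qed.

Lemma lenc_lcode l : lenc (lcode l) = length l.
Proof. unfold lenc. rewrite cnt_lcode. pose proof (lcode_len l). lia. Qed.

Lemma lcode_inj l l' : lcode l = lcode l' -> l = l'.
Proof.
  revert l'; induction l; intros [|x t] H; simpl in H; try discriminate; auto.
  injection H as H. apply cpair_inj in H as [H1 H2]. subst. f_equal; auto.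
Qed.

Lemma PR_tlc : PR 1 (P1 tlc).
Proof. apply Pusnd, Ppred; pr_proj. Qed.
Lemma PR_hdc : PR 1 (P1 hdc).
Proof. apply Pufst, Ppred; pr_proj. Qed.
Lemma PR_itl : PR 2 (P2 itl).
Proof. apply (PR_rec2 (fun y => y) (fun _ r _ => tlc r)). apply PR_id1.
  apply comp1. apply PR_tlc. pr_proj. reflexivity. reflexivity. Qed.
Lemma Pnthc n f g : PR n f -> PR n g -> PR n (fun v => nthc (f v) (g v)).
Proof. intros. unfold nthc. apply comp1. apply PR_hdc.
  apply (comp2 n itl g f); auto. apply PR_itl. Qed.
Lemma PR_cnt : PR 2 (P2 cnt).
Proof. apply (PR_rec2 (fun _ => 0) (fun k r c => r + ifz (itl k c) 0 1)). apply PR_const.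
  apply Padd. pr_proj. apply Pifz. apply (comp2 3 itl). apply PR_itl. pr_proj. pr_proj.
  apply PR_const. apply PR_const. reflexivity. reflexivity. Qed.
Lemma Plenc n f : PR n f -> PR n (fun v => lenc (f v)).
Proof. intros. unfold lenc. apply comp2; auto. apply PR_cnt. Qed.



Fixpoint bld (F : nat -> nat -> nat) (n c k : nat) : nat :=
  match n with 0 => 0 | S j => S (cpair (F c (k - S j)) (bld F j c k)) end.

Lemma bld_eq F n c k : n <= k -> bld F n c k = lcode (map (F c) (seq (k - n) n)).
Proof.
  induction n; intros H; simpl; auto. rewrite IHn by lia.
  replace (k - n) with (S (k - S n)) by lia. reflexivity.
Qed.

Lemma PR_bld F : PR 2 (P2 F) -> PR 3 (P3 (bld F)).
Proof.
  intros HF. apply (PR_rec3 (fun _ _ => 0) (fun j r c k => S (cpair (F c (k - S j)) r))).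
  apply PR_const. apply PR_succ. apply Pcpair. apply comp2; auto. pr_proj.
  apply Psub. pr_proj. apply PR_succ; pr_proj. pr_proj. reflexivity. reflexivity.
Qed.

Lemma pre_S q k : pre q (S k) = pre q k ++ [q k].
Proof. unfold pre. rewrite seq_S, map_app. reflexivity. Qed.

Lemma length_pre (p : baire) m : length (pre p m) = m.
Proof. unfold pre. rewrite length_map, length_seq. reflexivity. Qed.

Lemma machine (L : nat) (F : nat -> nat -> nat) : PR 2 (P2 F) ->
  exists e, forall p q, (forall m i, i + L < m -> F (lcode (pre p m)) i = q i) -> computes e p q.
Proof.
  intros HF.
  set (OUT := fun c => bld F (lenc c - L) c (lenc c - L)).
  assert (HO : PR 1 (P1 OUT)).
  { unfold OUT. apply comp3. apply PR_bld; auto. apply Psub. apply Plenc; pr_proj. apply PR_const.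
    pr_proj. apply Psub. apply Plenc; pr_proj. apply PR_const. }
  destruct HO as [e [He HO]]. exists e. intros p q Hq.
  assert (Hout : forall m, OUT (lcode (pre p m)) = lcode (pre q (m - L))).
  { intros m. unfold OUT. rewrite lenc_lcode, length_pre.
    rewrite bld_eq by lia. replace (m - L - (m - L)) with 0 by lia. f_equal.
    unfold pre. apply map_ext_in. intros i Hi. apply in_seq in Hi. apply Hq. lia. }
  assert (Hw : forall m w, wout e p m w -> w = pre q (m - L)).
  { intros m w H. unfold wout in H. apply lcode_inj. rewrite <- Hout.
    symmetry. eapply eval_det. apply (HO [lcode (pre p m)]). reflexivity. auto. auto. }
  assert (Hw2 : forall m, wout e p m (pre q (m - L))).
  { intros m. unfold wout. rewrite <- Hout. apply (HO [lcode (pre p m)]). reflexivity. }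
  split; [|split].
  - intros m. eexists; apply Hw2.
  - intros m w w' H1 H2. apply Hw in H1, H2. subst.
    destruct (le_lt_dec L m).
    + replace (S m - L) with (S (m - L)) by lia. rewrite pre_S. eauto.
    + replace (S m - L) with 0 by lia. replace (m - L) with 0 by lia. exists []. reflexivity.
  - intros n. exists (S n + L), (pre q (S n)). split.
    + replace (S n) with (S n + L - L) at 2 by lia. apply Hw2.
    + unfold pre. rewrite nth_error_map. rewrite nth_error_seq.
      destruct (Nat.ltb_spec n (S n)); [|lia]. reflexivity.
Qed.



Lemma nthc_pre (p : baire) m j : j < m -> nthc (lcode (pre p m)) j = p j.
Proof. intros H. rewrite nthc_lcode. unfold pre.
  rewrite nth_indep with (d' := p 0) by (rewrite length_map, length_seq; auto).
  rewrite map_nth, seq_nth; auto. Qed.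

Lemma computable_of (L : nat) (F : nat -> nat -> nat) (Q : baire -> baire) :
  PR 2 (P2 F) -> (forall p m i, i + L < m -> F (lcode (pre p m)) i = Q p i) ->
  computable (fun p => Some (Q p)).
Proof.
  intros HF HQ. destruct (machine L F HF) as [e He]. exists e.
  intros p q H. injection H as <-. apply He. apply HQ.
Qed.

Definition Pc (n : nat) (G : (nat -> nat) -> list nat -> nat) :=
  PR (S n) (fun v => G (nthc (hd 0 v)) (tl v)).

Fixpoint zc (a : nat -> nat) (i : nat) : nat :=
  match i with 0 => 0 | S k => zc a k + ifz (a k) 1 0 end.

Lemma zc_ext a b i : (forall j, j < i -> a j = b j) -> zc a i = zc b i.
Proof. induction i; intros H; simpl; auto. rewrite IHi, H; auto. Qed.

Lemma PR_zc : PR 2 (P2 (fun c i => zc (nthc c) i)).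
Proof.
  apply (comp2 2 (fun i c => zc (nthc c) i)); [|pr_proj|pr_proj].
  apply (PR_rec2 (fun _ => 0) (fun i r c => r + ifz (nthc c i) 1 0)). apply PR_const.
  apply Padd. pr_proj. apply Pifz. apply Pnthc; pr_proj. apply PR_const. apply PR_const.
  reflexivity. reflexivity.
Qed.
Lemma Pzc n f g : PR n f -> PR n g -> PR n (fun v => zc (nthc (f v)) (g v)).
Proof. intros; apply (comp2 n (fun c i => zc (nthc c) i)); auto; apply PR_zc. Qed.

Definition QH2 (s : baire) : baire := fun i => S (zc s i).
Lemma comp_H2 : computable (fun p => Some (QH2 p)).
Proof.
  apply (computable_of 0 (fun c i => S (zc (nthc c) i))).
  apply PR_succ. apply Pzc; pr_proj.
  intros p m i Hi. unfold QH2. f_equal. apply zc_ext. intros; apply nthc_pre; lia.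
Qed.

Definition bc (k : nat) := cpair (S k) (cpair 1 (pow2 (S k))).
Definition QK1 (p : baire) : baire := fun i => ifz (p i) (S (bc (zc p i))) 0.
Lemma comp_K1 : computable (fun p => Some (QK1 p)).
Proof.
  apply (computable_of 0 (fun c i => ifz (nthc c i) (S (bc (zc (nthc c) i))) 0)).
  apply Pifz. apply Pnthc; pr_proj. apply PR_succ. unfold bc. apply Pcpair.
  apply PR_succ; apply Pzc; pr_proj. apply Pcpair. apply PR_const. apply Ppow2.
  apply PR_succ; apply Pzc; pr_proj. apply PR_const.
  intros p m i Hi. unfold QK1. rewrite nthc_pre by lia. f_equal. f_equal. f_equal.
  apply zc_ext. intros; apply nthc_pre; lia.
Qed.

Definition QH1 (r : baire) : baire := fun i => ifz (r (i+2)) 0 (ifz (r (i+2) - 1 - i) 1 0).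
Lemma comp_H1 : computable (fun p => Some (QH1 p)).
Proof.
  apply (computable_of 2 (fun c i => ifz (nthc c (i+2)) 0 (ifz (nthc c (i+2) - 1 - i) 1 0))).
  apply Pifz. apply Pnthc. pr_proj. apply Padd. pr_proj. apply PR_const. apply PR_const.
  apply Pifz. apply Psub. apply Psub. apply Pnthc. pr_proj. apply Padd. pr_proj. apply PR_const.
  apply PR_const. pr_proj. apply PR_const. apply PR_const.
  intros p m i Hi. unfold QH1. rewrite nthc_pre by lia. reflexivity.
Qed.

Definition ltbn x y := ifz (y - x) 0 1.
Definition dist x y := (x - y) + (y - x).
Definition contb (c k : nat) : nat :=
  let a := ufst c in let m := ufst (usnd c) in let d := usnd (usnd c) in
  ifz a (ltbn (S d) (m * pow2 k))
        (ltbn (dist (pow2 k) (pow2 (a - 1)) * S d) (m * pow2 (a - 1 + k))).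
Definition hit (acc : nat -> nat) (j k : nat) := ifz (acc j) 0 (contb (acc j - 1) k).
Fixpoint rr (acc : nat -> nat) (n k : nat) : nat :=
  match n with 0 => 0 | S j => ifz (rr acc j k) (hit acc j k) 1 end.
Fixpoint Lv (acc : nat -> nat) (i : nat) : nat :=
  match i with 0 => 0 | S j => Lv acc j + rr acc (S j) (Lv acc j) end.
Definition QK2 (p : baire) : baire := fun i => ifz (rr p (S i) (Lv p i)) 1 0.

Lemma rr_ext a b n k : (forall j, j < n -> a j = b j) -> rr a n k = rr b n k.
Proof. induction n; intros H; simpl; auto. rewrite IHn by auto. unfold hit. rewrite H; auto. Qed.
Lemma Lv_ext a b i : (forall j, j < i -> a j = b j) -> Lv a i = Lv b i.
Proof. induction i; intros H. reflexivity. cbn [Lv]. rewrite IHi by auto.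
  rewrite (rr_ext a b (S i)); auto. Qed.

Lemma Pcontb n f g : PR n f -> PR n g -> PR n (fun v => contb (f v) (g v)).
Proof.
  intros Hf Hg. unfold contb. apply Pifz. apply Pufst; auto.
  - unfold ltbn. apply Pifz. apply Psub. apply Pmul. apply Pufst, Pusnd; auto. apply Ppow2; auto.
    apply PR_succ, Pusnd, Pusnd; auto. apply PR_const. apply PR_const.
  - unfold ltbn. apply Pifz. apply Psub. apply Pmul. apply Pufst, Pusnd; auto.
    apply Ppow2. apply Padd. apply Psub. apply Pufst; auto. apply PR_const. auto.
    apply Pmul. unfold dist. apply Padd; apply Psub; apply Ppow2; auto; apply Psub;
    try apply Pufst; auto; apply PR_const.
    apply PR_succ, Pusnd, Pusnd; auto. apply PR_const. apply PR_const.
Qed.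

Lemma PR_rr : PR 3 (P3 (fun c n k => rr (nthc c) n k)).
Proof.
  apply (comp3 3 (fun n c k => rr (nthc c) n k)); [|pr_proj|pr_proj|pr_proj].
  apply (PR_rec3 (fun _ _ => 0) (fun j r c k => ifz r (hit (nthc c) j k) 1)). apply PR_const.
  apply Pifz. pr_proj. unfold hit. apply Pifz. apply Pnthc; pr_proj. apply PR_const.
  apply Pcontb. apply Psub. apply Pnthc; pr_proj. apply PR_const. pr_proj. apply PR_const.
  reflexivity. reflexivity.
Qed.
Lemma Prr n f g h : PR n f -> PR n g -> PR n h -> PR n (fun v => rr (nthc (f v)) (g v) (h v)).
Proof. intros; apply (comp3 n (fun c n k => rr (nthc c) n k)); auto; apply PR_rr. Qed.

Lemma PR_Lv : PR 2 (P2 (fun c i => Lv (nthc c) i)).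
Proof.
  apply (comp2 2 (fun i c => Lv (nthc c) i)); [|pr_proj|pr_proj].
  apply (PR_rec2 (fun _ => 0) (fun j r c => r + rr (nthc c) (S j) r)). apply PR_const.
  apply Padd. pr_proj. apply Prr. pr_proj. apply PR_succ; pr_proj. pr_proj.
  reflexivity. reflexivity.
Qed.

Lemma comp_K2 : computable (fun p => Some (QK2 p)).
Proof.
  apply (computable_of 0 (fun c i => ifz (rr (nthc c) (S i) (Lv (nthc c) i)) 1 0)).
  apply Pifz. apply Prr. pr_proj. apply PR_succ; pr_proj.
  apply (comp2 2 (fun c i => Lv (nthc c) i)). apply PR_Lv. pr_proj. pr_proj.
  apply PR_const. apply PR_const.
  intros p m i Hi. unfold QK2. rewrite (Lv_ext (nthc (lcode (pre p m))) p).
  rewrite (rr_ext (nthc (lcode (pre p m))) p). reflexivity.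
  intros; apply nthc_pre; lia. intros; apply nthc_pre; lia.
Qed.

Open Scope R_scope.

Definition h (k : nat) : R := (/2) ^ k.

Lemma h_pos k : 0 < h k.
Proof. unfold h. apply pow_lt. lra. Qed.
Lemma h_S k : h (S k) = h k / 2.
Proof. unfold h. simpl. lra. Qed.
Lemma h_0 : h 0 = 1.
Proof. reflexivity. Qed.
Lemma h_le_add a d : h (a + d) <= h a.
Proof. induction d. rewrite Nat.add_0_r; lra. rewrite Nat.add_succ_r, h_S.
  pose proof (h_pos (a + d)). lra. Qed.
Lemma h_le a b : (a <= b)%nat -> h b <= h a.
Proof. intros H. replace b with (a + (b - a))%nat by lia. apply h_le_add. Qed.
Lemma h_lt a b : (a < b)%nat -> h b <= h a / 2.
Proof. intros H. rewrite <- h_S. apply h_le. lia. Qed.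
Lemma h_lt' a b : (a < b)%nat -> h b < h a.
Proof. intros H. pose proof (h_lt a b H). pose proof (h_pos a). lra. Qed.
Lemma h_inj a b : h a = h b -> a = b.
Proof. intros H. destruct (Nat.lt_trichotomy a b) as [L|[L|L]]; auto.
  apply h_lt' in L; lra. apply h_lt' in L; lra. Qed.

Lemma nu_S k : nu (S k) = - h k.
Proof. reflexivity. Qed.

Lemma in_omega1_h k : in_omega1 (- h k).
Proof. right. exists k. reflexivity. Qed.

Lemma abs_ge z : z <= Rabs z /\ - z <= Rabs z.
Proof. split. apply Rle_abs. rewrite <- Rabs_Ropp. apply Rle_abs. Qed.

Lemma sep x k : in_omega1 x -> Rabs (x + h k) < h (S k) -> x = - h k.
Proof.
  intros [H0 | [j Hj]] Hlt; pose proof (h_S k) as HS; pose proof (h_pos k).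
  - subst. rewrite Rplus_0_l, Rabs_pos_eq in Hlt by lra. lra.
  - subst. change ((/2)^j) with (h j) in *. destruct (abs_ge (- h j + h k)).
    destruct (Nat.lt_trichotomy j k) as [L|[L|L]].
    + apply h_lt in L. pose proof (h_pos j). lra.
    + subst; auto.
    + apply h_lt in L. lra.
Qed.

Lemma approx r y : delta omega1 r y -> forall i, Rabs (nu (r i) - y) <= h i.
Proof.
  intros [Hc Hl] i. apply Rnot_lt_le. intros Hlt.
  destruct (Hl (Rabs (nu (r i) - y) - h i)) as [N HN]. lra.
  specialize (HN (max N i) ltac:(lia)). unfold R_dist in HN.
  specialize (Hc i (max N i) ltac:(lia)). change ((/2)^i) with (h i) in Hc.
  pose proof (Rabs_triang (nu (r i) - nu (r (max N i))) (nu (r (max N i)) - y)).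
  replace (nu (r i) - nu (r (max N i)) + (nu (r (max N i)) - y)) with (nu (r i) - y) in H by ring.
  lra.
Qed.

Lemma INR_pow2 k : INR (pow2 k) = 2 ^ k.
Proof. rewrite pow2_eq, pow_INR. reflexivity. Qed.
Lemma h_inv k : h k = / 2 ^ k.
Proof. unfold h. apply pow_inv. Qed.
Lemma pow2_pos k : 0 < 2 ^ k.
Proof. apply pow_lt; lra. Qed.

Lemma ball_bc k x : in_ball (bc k) x <-> in_omega1 x /\ x = - h k.
Proof.
  split.
  - intros (a & m & d & Heq & Hx & Hlt). unfold bc in Heq. apply cpair_inj in Heq as [<- Heq].
    apply cpair_inj in Heq as [<- <-]. split; auto. apply sep; auto.
    change (nu (S k)) with (- h k) in Hlt. replace (x - - h k) with (x + h k) in Hlt by ring.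
    eapply Rlt_le_trans. apply Hlt. rewrite (S_INR (pow2 (S k))), INR_pow2, h_inv. simpl INR.
    pose proof (pow2_pos (S k)). unfold Rdiv. rewrite Rmult_1_l. apply Rlt_le.
    apply Rinv_lt_contravar. nra. lra.
  - intros [Hx ->]. exists (S k), 1%nat, (pow2 (S k)). split. reflexivity. split; auto.
    rewrite nu_S. replace (- h k - - h k) with 0 by ring. rewrite Rabs_R0.
    apply Rdiv_lt_0_compat. simpl; lra. apply lt_0_INR; lia.
Qed.

Lemma div_lt_iff X A Y B : 0 < A -> 0 < B -> (X / A < Y / B <-> X * B < Y * A).
Proof.
  intros HA HB. split; intros H.
  - replace (X * B) with ((X / A) * (A * B)) by (field; lra).
    replace (Y * A) with ((Y / B) * (A * B)) by (field; lra).
    apply Rmult_lt_compat_r; nra.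
  - replace (X / A) with ((X * B) / (A * B)) by (field; lra).
    replace (Y / B) with ((Y * A) / (A * B)) by (field; lra).
    unfold Rdiv. apply Rmult_lt_compat_r. apply Rinv_0_lt_compat; nra. auto.
Qed.

Lemma ltbn_spec x y : (ltbn x y = 1%nat /\ (x < y)%nat) \/ (ltbn x y = 0%nat /\ ~ (x < y)%nat).
Proof. unfold ltbn. destruct (y - x)%nat eqn:E; simpl; [right|left]; split; auto; lia. Qed.

Lemma INR_dist x y : INR (dist x y) = Rabs (INR x - INR y).
Proof. unfold dist. destruct (le_lt_dec x y).
  - replace (x - y)%nat with 0%nat by lia. rewrite Nat.add_0_l, minus_INR by lia.
    rewrite Rabs_minus_sym, Rabs_pos_eq; auto. apply le_INR in l. lra.
  - replace (y - x)%nat with 0%nat by lia. rewrite Nat.add_0_r, minus_INR by lia.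
    rewrite Rabs_pos_eq; auto. apply lt_INR in l. lra.
Qed.

Lemma contb_spec c k : (contb c k = 1%nat /\ in_ball c (- h k)) \/ (contb c k = 0%nat /\ ~ in_ball c (- h k)).
Proof.
  set (a := ufst c). set (m := ufst (usnd c)). set (d := usnd (usnd c)).
  assert (Hc : c = cpair a (cpair m d)) by (unfold a, m, d; rewrite !cpair_unpair; auto).
  assert (Hb : in_ball c (- h k) <-> Rabs (- h k - nu a) < INR m / INR (S d)).
  { split.
    - intros (a' & m' & d' & Heq & _ & Hlt). rewrite Hc in Heq.
      apply cpair_inj in Heq as [<- Heq]. apply cpair_inj in Heq as [<- <-]. auto.
    - intros H. exists a, m, d. split; auto. split; auto. apply in_omega1_h. }
  assert (HD : 0 < INR (S d)) by (apply lt_0_INR; lia).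
  unfold contb. fold a m d. destruct a as [|j].
  - change (nu 0) with 0 in Hb. simpl ifz.
    assert (Hr : Rabs (- h k - 0) < INR m / INR (S d) <-> (S d < m * pow2 k)%nat).
    { replace (- h k - 0) with (- h k) by ring.
      rewrite Rabs_Ropp, Rabs_pos_eq by (apply Rlt_le, h_pos).
      rewrite h_inv. replace (/ 2 ^ k) with (1 / 2 ^ k) by (field; apply pow_nonzero; lra).
      rewrite div_lt_iff by (auto; apply pow2_pos). split; intros L.
      - apply INR_lt. rewrite mult_INR, INR_pow2. lra.
      - apply lt_INR in L. rewrite mult_INR, INR_pow2 in L. lra. }
    rewrite Hr in Hb.
    destruct (ltbn_spec (S d) (m * pow2 k)) as [[-> L]|[-> L]]; [left|right]; split; auto;
      rewrite Hb; auto.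
  - simpl ifz. rewrite Nat.sub_0_r. change (nu (S j)) with (- h j) in Hb.
    assert (Hr : Rabs (- h k - - h j) < INR m / INR (S d) <->
       (dist (pow2 k) (pow2 j) * S d < m * pow2 (j + k))%nat).
    { rewrite !h_inv.
      pose proof (pow2_pos k). pose proof (pow2_pos j).
      replace (- / 2 ^ k - - / 2 ^ j) with ((2 ^ k - 2 ^ j) / (2 ^ j * 2 ^ k))
        by (field; split; lra).
      unfold Rdiv at 1. rewrite Rabs_mult, (Rabs_pos_eq (/ _))
        by (apply Rlt_le, Rinv_0_lt_compat; nra).
      fold (Rdiv (Rabs (2 ^ k - 2 ^ j)) (2 ^ j * 2 ^ k)).
      rewrite div_lt_iff by (auto; nra). split; intros L.
      - apply INR_lt. rewrite !mult_INR, INR_dist, !INR_pow2, pow_add. lra.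
      - apply lt_INR in L. rewrite !mult_INR, INR_dist, !INR_pow2, pow_add in L. lra. }
    rewrite Hr in Hb.
    destruct (ltbn_spec (dist (pow2 k) (pow2 j) * S d) (m * pow2 (j + k))) as [[-> L]|[-> L]];
      [left|right]; split; auto; rewrite Hb; auto.
Qed.

Open Scope R_scope.

Lemma zeros_zc (p : baire) (b : nat -> bool) : delta cantor p b -> forall m, zeros_upto b m = zc p m.
Proof.
  intros Hpb m. induction m; simpl; auto. rewrite IHm.
  destruct (Hpb m) as [[-> ->]|[-> ->]]; reflexivity.
Qed.

Lemma zc_mono p i j : (i <= j)%nat -> (zc p i <= zc p j)%nat.
Proof. induction 1; auto. simpl. lia. Qed.

Lemma zc_hit p i k : (k < zc p i)%nat -> exists j, (j < i)%nat /\ p j = 0%nat /\ zc p j = k.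
Proof.
  induction i; simpl; intros H. lia.
  destruct (p i) eqn:Hp; simpl in H.
  - destruct (Nat.eq_dec k (zc p i)). exists i; auto.
    destruct IHi as [j Hj]. lia. exists j; intuition lia.
  - destruct IHi as [j Hj]. lia. exists j; intuition lia.
Qed.

Lemma hgap a i : (a <= S i)%nat -> h (i + 2) < h a.
Proof. intros H. apply h_lt'. lia. Qed.

Lemma hsep a b i : (a < b)%nat -> (a <= i)%nat -> h (i + 2) < Rabs (h a - h b).
Proof.
  intros H1 H2. pose proof (h_lt a b H1). pose proof (h_pos b). pose proof (h_pos a).
  rewrite Rabs_pos_eq by lra.
  assert (Hx : h (i + 2) < h (S a)) by (apply h_lt'; lia). rewrite h_S in Hx. lra.
Qed.

Lemma QK1_spec p i c : QK1 p i = S c <-> p i = 0%nat /\ c = bc (zc p i).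
Proof. unfold QK1. destruct (p i); simpl; split; intros H; try discriminate; intuition congruence. Qed.

Lemma dir1 : sW_le Sort min_omega1.
Proof.
  exists (fun r => Some (QH1 r)), (fun p => Some (QK1 p)).
  split. apply comp_H1. split. apply comp_K1.
  intros G HG p b Hpb [out Hout]. unfold pcomp.
  set (A := fun x => in_omega1 x /\ ~ exists i c, QK1 p i = S c /\ in_ball c x).
  assert (HA : delta closed_omega1 (QK1 p) A) by (intros x; cbn; unfold A; tauto).
  assert (Hrem : forall x, (exists i c, QK1 p i = S c /\ in_ball c x) <->
                 exists i, p i = 0%nat /\ in_omega1 x /\ x = - h (zc p i)).
  { intros x; split.
    - intros (i & c & H1 & H2). apply QK1_spec in H1 as [H1 ->]. apply ball_bc in H2. eauto.
    - intros (i & H1 & H2). exists i, (bc (zc p i)). split. apply QK1_spec; auto.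
      apply ball_bc; tauto. }
  pose proof (zeros_zc p b Hpb) as Hz.
  assert (Hcase : (exists n, (forall i, (zc p i <= n)%nat) /\ (exists M, zc p M = n) /\
                    forall i, out i = Nat.leb n i) \/
                  ((forall k, exists i, (k <= zc p i)%nat) /\ forall i, out i = false)).
  { destruct Hout as [(n & [M HM] & Ho) | [Hinf Ho]].
    - left. exists n. split; [|split]; auto.
      + intros i. rewrite <- (HM (max i M)) by lia. rewrite Hz. apply zc_mono; lia.
      + exists M. rewrite <- Hz. apply HM; lia.
    - right. split; auto. induction k. exists 0%nat; lia.
      destruct IHk as [i Hi]. destruct (Hinf i) as [j [Hj Hb]].
      exists (S j). simpl. destruct (Hpb j) as [[-> _]|[_ Hb']]; [|congruence].
      pose proof (zc_mono p i j Hj). simpl. lia. }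
  assert (Hmin : exists y, min_omega1 A y /\
      ((exists n, y = - h n /\ (forall i, out i = Nat.leb n i)) \/ (y = 0 /\ forall i, out i = false))).
  { destruct Hcase as [(n & Hle & [M HM] & Ho) | [Hunb Ho]].
    - exists (- h n). split; [split|left; eauto].
      + split. apply in_omega1_h. rewrite Hrem. intros (i & Hi & _ & He).
        assert (zc p (S i) <= n)%nat by auto. simpl in H. rewrite Hi in H. simpl in H.
        apply Ropp_eq_compat in He. rewrite !Ropp_involutive in He. apply h_inj in He. lia.
      + intros z [Hz1 Hz2]. destruct Hz1 as [-> | [j ->]].
        * pose proof (h_pos n); lra.
        * change ((/2)^j) with (h j). destruct (le_lt_dec n j).
          -- apply h_le in l. lra.
          -- exfalso. apply Hz2. apply Hrem. rewrite <- HM in l.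
             destruct (zc_hit p M j l) as (i & _ & Hi & Hzi). exists i. split; auto.
             split. apply in_omega1_h. rewrite Hzi. reflexivity.
    - exists 0. split; [split|right; auto].
      + split. left; auto. rewrite Hrem. intros (i & _ & _ & He). pose proof (h_pos (zc p i)). lra.
      + intros z [Hz1 Hz2]. destruct Hz1 as [-> | [j ->]]. lra.
        exfalso. apply Hz2. apply Hrem. destruct (Hunb (S j)) as [M HM].
        destruct (zc_hit p M j ltac:(lia)) as (i & _ & Hi & Hzi). exists i. split; auto.
        split. apply in_omega1_h. rewrite Hzi. reflexivity. }
  destruct Hmin as [y [Hy Hyc]].
  destruct (HG (QK1 p) A HA (ex_intro _ y Hy)) as (r & Hr & y' & Hdr & Hy').
  assert (y' = y). { destruct Hy, Hy'. apply Rle_antisym; auto. }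
  subst y'. rewrite Hr. exists (QH1 r). split; auto. exists out. split; auto.
  pose proof (approx r y Hdr) as Hap.
  intros i. specialize (Hap (i + 2)%nat). unfold QH1.
  destruct Hyc as [(n & -> & Ho) | [-> Ho]]; rewrite Ho.
  - destruct (r (i + 2)%nat) as [|k] eqn:Hri; simpl ifz.
    + left; split; auto. apply Nat.leb_gt. change (nu 0) with 0 in Hap.
      rewrite Rminus_0_l, Ropp_involutive, Rabs_pos_eq in Hap by (apply Rlt_le, h_pos).
      destruct (le_lt_dec n (S i)); [|lia]. apply hgap in l. lra.
    + change (nu (S k)) with (- h k) in Hap.
      replace (- h k - - h n) with (- (h k - h n)) in Hap by ring. rewrite Rabs_Ropp in Hap.
      rewrite Nat.sub_0_r. destruct (k - i)%nat eqn:Hk; simpl ifz.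
      * right. split; auto. apply Nat.leb_le. destruct (le_lt_dec n i); auto.
        exfalso. assert (k < n)%nat by lia. pose proof (hsep k n i H ltac:(lia)). lra.
      * left. split; auto. apply Nat.leb_gt. destruct (le_lt_dec n i); [|lia].
        exfalso. assert (n < k)%nat by lia. pose proof (hsep n k i H ltac:(lia)).
        rewrite Rabs_minus_sym in H0. lra.
  - left. split; auto. destruct (r (i + 2)%nat) as [|k] eqn:Hri; simpl ifz; auto.
    change (nu (S k)) with (- h k) in Hap. rewrite Rminus_0_r, Rabs_Ropp, Rabs_pos_eq in Hap
      by (apply Rlt_le, h_pos).
    rewrite Nat.sub_0_r. destruct (k - i)%nat eqn:Hk; auto. exfalso.
    pose proof (hgap k i ltac:(lia)). lra.
Qed.

Open Scope R_scope.

Definition removed (p : baire) (k : nat) := exists j c, p j = S c /\ in_ball c (- h k).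

Lemma rr_spec p n k :
  (rr p n k = 1%nat /\ exists j c, (j < n)%nat /\ p j = S c /\ in_ball c (- h k)) \/
  (rr p n k = 0%nat /\ ~ exists j c, (j < n)%nat /\ p j = S c /\ in_ball c (- h k)).
Proof.
  induction n; simpl.
  - right; split; auto. intros (j & c & H & _). lia.
  - destruct IHn as [[-> Hex] | [-> Hno]]; simpl ifz.
    + left; split; auto. destruct Hex as (j & c & ? & ?). exists j, c; intuition lia.
    + unfold hit. destruct (p n) as [|c] eqn:Hpn; simpl ifz.
      * right; split; auto. intros (j & c & Hj & Hp & Hb).
        destruct (Nat.eq_dec j n). subst; congruence. apply Hno; exists j, c; intuition lia.
      * rewrite Nat.sub_0_r. destruct (contb_spec c k) as [[-> Hb]|[-> Hb]].
        -- left; split; auto. exists n, c; auto.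
        -- right; split; auto. intros (j & c' & Hj & Hp & Hb').
           destruct (Nat.eq_dec j n). subst. rewrite Hpn in Hp. injection Hp as <-. auto.
           apply Hno; exists j, c'; intuition lia.
Qed.

Lemma rr_le1 p n k : (rr p n k <= 1)%nat.
Proof. destruct (rr_spec p n k) as [[-> _]|[-> _]]; lia. Qed.

Lemma Lv_S p i : Lv p (S i) = (Lv p i + rr p (S i) (Lv p i))%nat.
Proof. reflexivity. Qed.

Lemma Lv_mono p i j : (i <= j)%nat -> (Lv p i <= Lv p j)%nat.
Proof. induction 1; auto. rewrite Lv_S. lia. Qed.

Lemma rr_removed p k j c m : p j = S c -> in_ball c (- h k) -> (j < m)%nat -> rr p m k = 1%nat.
Proof. intros. destruct (rr_spec p m k) as [[-> _]|[_ Hno]]; auto. exfalso; apply Hno; eauto. Qed.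

Lemma reach p : forall K, (forall k, (k < K)%nat -> removed p k) ->
  forall k, (k <= K)%nat -> exists M, (k <= Lv p M)%nat.
Proof.
  intros K HK k. induction k; intros Hk. exists 0%nat; lia.
  destruct IHk as [M HM]. lia.
  destruct (HK k ltac:(lia)) as (j & c & Hj & Hb).
  set (M' := max M j). assert (H1 : (k <= Lv p M')%nat) by (pose proof (Lv_mono p M M'); lia).
  destruct (Nat.eq_dec (Lv p M') k).
  - exists (S M'). rewrite Lv_S, e. rewrite (rr_removed p k j c (S M')); auto. lia. lia.
  - exists M'. lia.
Qed.

Lemma Lv_gap p N M : (Lv p N < Lv p M)%nat -> exists i, (N <= i)%nat /\ rr p (S i) (Lv p i) <> 0%nat.
Proof.
  induction M; intros H. pose proof (Lv_mono p 0 N); simpl in *; lia.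
  rewrite Lv_S in H. destruct (rr p (S M) (Lv p M)) eqn:E.
  - apply IHM; lia.
  - destruct (le_lt_dec N M). exists M; split; auto. rewrite E; lia.
    pose proof (Lv_mono p (S M) N ltac:(lia)). rewrite Lv_S, E in H0. lia.
Qed.

Lemma zc_sorted (s : baire) (n : nat) : (forall j, s j = 0%nat <-> (j < n)%nat) ->
  forall i, zc s i = min i n.
Proof.
  intros Hs i. induction i. simpl; lia. cbn [zc]. rewrite IHi.
  destruct (s i) eqn:E.
  - apply Hs in E. cbn [ifz]. lia.
  - assert (~ (i < n)%nat) by (intro H; apply Hs in H; congruence). cbn [ifz]; lia.
Qed.

Lemma hcauchy a b i : (a = b \/ (i <= a /\ i <= b))%nat -> Rabs (- h a - - h b) <= h i.
Proof.
  intros [-> | [H1 H2]]. replace (- h b - - h b) with 0 by ring. rewrite Rabs_R0.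
  apply Rlt_le, h_pos.
  apply h_le in H1. apply h_le in H2. pose proof (h_pos a). pose proof (h_pos b).
  destruct (abs_ge (- h a - - h b)). unfold Rabs; destruct Rcase_abs; lra.
Qed.

Lemma dir2 : sW_le min_omega1 Sort.
Proof.
  exists (fun s => Some (QH2 s)), (fun p => Some (QK2 p)).
  split. apply comp_H2. split. apply comp_K2.
  intros G HG p A HpA [y Hy]. unfold pcomp.
  set (b := fun i => Nat.eqb (rr p (S i) (Lv p i)) 0).
  assert (Hub : delta cantor (QK2 p) b).
  { intros i. unfold QK2, b. destruct (rr p (S i) (Lv p i)); simpl; auto. }
  assert (Hzb : forall m, zeros_upto b m = Lv p m).
  { induction m. reflexivity. cbn [zeros_upto]. rewrite IHm, Lv_S. unfold b.
    pose proof (rr_le1 p (S m) (Lv p m)).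
    destruct (rr p (S m) (Lv p m)) as [|[|]]; simpl; lia. }
  assert (HAx : forall x, A x <-> in_omega1 x /\ ~ exists i c, p i = S c /\ in_ball c x) by apply HpA.
  destruct Hy as [HAy Hmin].
  assert (Hrem : forall k, - h k < y -> removed p k).
  { intros k Hk. apply NNPP. intros Hn. assert (A (- h k)).
    { apply HAx. split. apply in_omega1_h. intros (i & c & ? & ?). apply Hn. exists i, c; auto. }
    apply Hmin in H. lra. }
  assert (Hyc : (exists n, y = - h n /\ exists M, forall m, (M <= m)%nat -> Lv p m = n) \/
                (y = 0 /\ forall k, exists M, (k <= Lv p M)%nat)).
  { assert (Hyo : in_omega1 y) by (apply HAx in HAy; tauto).
    destruct Hyo as [-> | [n Hn]].
    - right. split; auto. intros k. apply (reach p (S k)); [|lia].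
      intros k' _. apply Hrem. pose proof (h_pos k'); lra.
    - left. change ((/2)^n) with (h n) in Hn. exists n. split; auto.
      assert (Hnr : forall m, rr p m n = 0%nat).
      { intros m. destruct (rr_spec p m n) as [[_ (j & c & _ & Hj & Hb)]|[-> _]]; auto.
        exfalso. apply HAx in HAy. destruct HAy as [_ HAy]. apply HAy. subst y. eauto. }
      assert (Hbd : forall m, (Lv p m <= n)%nat).
      { induction m. simpl; lia. rewrite Lv_S. pose proof (rr_le1 p (S m) (Lv p m)).
        destruct (Nat.eq_dec (Lv p m) n). rewrite e, Hnr. lia. lia. }
      destruct (reach p n) with (k := n) as [M HM]; auto.
      intros k Hk. apply Hrem. subst y. pose proof (h_lt' k n Hk). lra.
      exists M. intros m Hm. pose proof (Lv_mono p M m Hm). specialize (Hbd m). lia. }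
  assert (Hz2 : (exists n, y = - h n /\ exactly_zeros b n) \/ (y = 0 /\ inf_zeros b)).
  { destruct Hyc as [(n & Hn & M & HM) | [Hy0 Hunb]].
    - left. exists n. split; auto. exists M. intros m Hm. rewrite Hzb; auto.
    - right. split; auto.
      intros N. destruct (Hunb (S (Lv p N))) as [M HM].
      destruct (Lv_gap p N (max M N)) as (i & Hi & Hr).
      pose proof (Lv_mono p M (max M N)); lia.
      exists i; split; auto. unfold b. apply Nat.eqb_neq; auto. }
  assert (Hex_unique : forall n n', exactly_zeros b n -> exactly_zeros b n' -> n = n').
  { intros n n' [M HM] [M' HM']. rewrite <- (HM (max M M')), <- (HM' (max M M')); lia. }
  assert (Hex_inf : forall n, exactly_zeros b n -> inf_zeros b -> False).
  { intros n [M HM] Hinf. destruct (Hinf M) as [i [Hi Hbi]].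
    pose proof (HM i Hi). pose proof (HM (S i) ltac:(lia)). simpl in H0. rewrite Hbi in H0. lia. }
  assert (Hout : exists out, Sort b out).
  { destruct Hz2 as [(n & _ & Hn)|[_ Hinf]].
    exists (fun i => Nat.leb n i). left. eauto.
    exists (fun _ => false). right. auto. }
  destruct (HG (QK2 p) b Hub Hout) as (s & Hs & out' & Hso & Hout').
  rewrite Hs. exists (QH2 s). split; auto. exists y. split; [|split; auto].
  assert (Hs' : forall j, s j = 0%nat <-> out' j = false).
  { intros j. destruct (Hso j) as [[-> ->]|[-> ->]]; split; congruence. }
  destruct Hz2 as [(n & -> & Hn) | [-> Hinf]].
  - assert (Ho' : forall i, out' i = Nat.leb n i).
    { destruct Hout' as [(n2 & Hn2 & Ho2)|[Hinf _]].
      - rewrite (Hex_unique n n2); auto.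
      - exfalso; eauto. }
    assert (Hzs : forall i, zc s i = min i n).
    { apply zc_sorted. intros j. rewrite Hs', Ho'. rewrite Nat.leb_gt. tauto. }
    split.
    + intros i j Hij. unfold QH2. change (nu (S (zc s i))) with (- h (zc s i)).
      change (nu (S (zc s j))) with (- h (zc s j)). rewrite !Hzs. apply hcauchy. lia.
    + intros eps Heps. exists n. intros m Hm. unfold R_dist, QH2.
      change (nu (S (zc s m))) with (- h (zc s m)). rewrite Hzs.
      replace (min m n) with n by lia. replace (- h n - - h n) with 0 by ring.
      rewrite Rabs_R0; auto.
  - assert (Ho' : forall i, out' i = false).
    { destruct Hout' as [(n2 & Hn2 & Ho2)|[_ Ho2]]; auto. exfalso; eauto. }
    assert (Hzs : forall i, zc s i = i).
    { intros i; induction i; [reflexivity|]. cbn [zc]. rewrite IHi.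
      assert (Hsi : s i = 0%nat) by (apply Hs'; auto). rewrite Hsi. cbn [ifz]. lia. }
    split.
    + intros i j Hij. unfold QH2. change (nu (S (zc s i))) with (- h (zc s i)).
      change (nu (S (zc s j))) with (- h (zc s j)). rewrite !Hzs. apply hcauchy. lia.
    + intros eps Heps. destruct (pow_lt_1_zero (/2) ltac:(rewrite Rabs_pos_eq; lra) eps Heps)
        as [N HN]. exists N. intros m Hm. unfold R_dist, QH2.
      change (nu (S (zc s m))) with (- h (zc s m)). rewrite Hzs.
      rewrite Rminus_0_r, Rabs_Ropp. apply HN. auto.
Qed.


Theorem proposition3p1 : sW_equiv Sort min_omega1.
Proof. split; [apply dir1 | apply dir2]. Qed.
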